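(* Let $n\in\mathbb{N}$, let $f\colon[0,1]^n\to[0,1]$ be an aggregation function, and let $\mathbf{a}=(a_0,\dots,a_{n-1})\in[0,1]^n$ with $\mathbf{a}\neq(0,\dots,0)$ and $\mathbf{a}\neq(1,\dots,1)$. Put $J_{\mathbf{a}}=\{i: a_i\neq0\}$ and define $h^f_{\mathbf{a}}(\mathbf{x})=G^n_{f(\mathbf{a})}(\mathbf{x})\wedge\bigwedge_{i\in J_{\mathbf{a}}}\chi_{a_i}(x_i)$. Then $h^f_{\mathbf{a}}$ is an aggregation function and for all $\mathbf{x}\in[0,1]^n$: $h^f_{\mathbf{a}}(\mathbf{x})=1$ if $\mathbf{x}=(1,\dots,1)$; $h^f_{\mathbf{a}}(\mathbf{x})=f(\mathbf{a})$ if $\mathbf{x}\ge\mathbf{a}$ (coordinatewise) and $\mathbf{x}\neq(1,\dots,1)$; and $h^f_{\mathbf{a}}(\mathbf{x})=0$ if $\mathbf{x}\not\ge\mathbf{a}$.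
   Context: An $n$-ary aggregation function on $[0,1]$ is a function $f\colon[0,1]^n\to[0,1]$ nondecreasing in each coordinate with $f(0,\dots,0)=0$ and $f(1,\dots,1)=1$. For $a\in[0,1]$, $\chi_a(x)=1$ if $x\ge a$ and $x\neq0$, and $\chi_a(x)=0$ otherwise. $\mathsf{Med}_b(x,y)$ is the median of $x,y,b$. For $b\in[0,1]$, $G^n_b\colon[0,1]^n\to[0,1]$ is defined inductively by $G^1_b(x_0)=\mathsf{Med}_b(\chi_0(x_0),\chi_1(x_0))$, $G^2_b(x_0,x_1)=\mathsf{Med}_b(\chi_0(x_0\vee x_1),\chi_1(x_0\wedge x_1))$, $G^{n+1}_b(x_0,\dots,x_n)=G^2_b(G^n_b(x_0,\dots,x_{n-1}),x_n)$ for $n\ge2$. *)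

(* Defs.v *)
From HB Require Import structures.
From mathcomp Require Import all_boot all_order all_algebra.
Set Implicit Arguments. Unset Strict Implicit. Unset Printing Implicit Defensive.
Import Order.TTheory GRing.Theory Num.Theory.
Local Open Scope ring_scope.

Section Defs.
Variable R : realFieldType.

Definition in01 (x : R) : Prop := 0 <= x <= 1.

Definition in_cube (n : nat) (x : 'I_n -> R) : Prop := forall i, in01 (x i).

(* n-ary aggregation function on [0,1] (only its values on [0,1]^n matter) *)
Definition is_aggregation (n : nat) (f : ('I_n -> R) -> R) : Prop :=
  (forall x, in_cube x -> in01 (f x)) /\
  (forall x y, in_cube x -> in_cube y -> (forall i, x i <= y i) -> f x <= f y) /\
  f (fun _ => 0) = 0 /\ f (fun _ => 1) = 1.

Definition chi (a x : R) : R := if (a <= x) && (x != 0) then 1 else 0.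

Definition Med (b x y : R) : R :=
  Order.max (Order.min x y) (Order.min (Order.max x y) b).

Definition G1 (b x0 : R) : R := Med b (chi 0 x0) (chi 1 x0).
Definition G2 (b x0 x1 : R) : R :=
  Med b (chi 0 (Order.max x0 x1)) (chi 1 (Order.min x0 x1)).

(* G on a list of arguments (x_0, ..., x_{n-1}); G^{n+1} = G^2(G^n(...), x_n) *)
Definition Gseq (b : R) (s : seq R) : R :=
  match s with
  | [::] => 0 (* G^0 is not defined in the paper; value irrelevant *)
  | [:: x0] => G1 b x0
  | x0 :: x1 :: s' => foldl (G2 b) (G2 b x0 x1) s'
  end.

Definition Gn (n : nat) (b : R) (x : 'I_n -> R) : R :=
  Gseq b [seq x i | i <- enum 'I_n].

Definition hfa (n : nat) (f : ('I_n -> R) -> R) (a : 'I_n -> R)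
    (x : 'I_n -> R) : R :=
  Order.min (Gn (f a) x) (\big[Order.min/1]_(i | a i != 0) chi (a i) (x i)).

End Defs.

(* Main.v *)
Require Import Defs.
From HB Require Import structures.
From mathcomp Require Import all_boot all_order all_algebra.
From mathcomp Require Import lra.
Import Order.TTheory GRing.Theory Num.Theory.
Local Open Scope ring_scope.

Section S.
Variable R : realFieldType.
Implicit Types (b u y z : R).

Lemma chi0E z : in01 z -> chi 0 z = if z == 0 then 0 else 1.
Proof. by case/andP=> z0 _; rewrite /chi z0; case: eqP. Qed.

Lemma chi1E z : in01 z -> chi 1 z = if z == 1 then 1 else 0.
Proof.
case/andP=> z0 z1; rewrite /chi; have [->|h] := eqVneq z 1.
  by rewrite lexx oner_neq0.
case: (leP 1 z) => //= h1.
by move/negP: h; case; rewrite eq_le z1 h1.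
Qed.

Lemma G2E b u y : in01 b -> in01 u -> in01 y ->
  G2 b u y = if (u == 1) && (y == 1) then 1 else if (u == 0) && (y == 0) then 0 else b.
Proof.
move=> hb; wlog uy : u y / u <= y => [H hu hy|hu hy].
  case: (leP u y) => uy0; first by have uy : u <= y := uy0; apply: H.
  have uy : y <= u := ltW uy0.
  by rewrite /G2 maxC minC -/(G2 b y u) H // andbC [(y == 0) && _]andbC.
move: (hb) (hu) (hy) => /andP[b0' b1'] /andP[u0' u1'] /andP[y0' y1'].
have b0 : 0 <= b := b0'. have b1 : b <= 1 := b1'.
have u0 : 0 <= u := u0'. have u1 : u <= 1 := u1'.
have y0 : 0 <= y := y0'. have y1 : y <= 1 := y1'.
clear b0' b1' u0' u1' y0' y1'.
rewrite /G2 /Med (max_r uy) (min_l uy) chi0E ?chi1E //.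
have h01 : (0 == 1 :> R) = false by rewrite eq_sym oner_eq0.
have [ye|yn0] := eqVneq y 0.
  have ue : u = 0 by lra.
  by rewrite ye ue eqxx h01 /= minxx maxxx (min_l b0) maxxx.
have [ue|un1] := eqVneq u 1.
  have ye : y = 1 by lra.
  by rewrite ye ue !eqxx /= minxx maxxx (min_r b1) (max_l b1).
by rewrite /= andbF (min_r ler01) (max_l ler01) (min_r b1) (max_r b0).
Qed.

Lemma G1E b x : in01 b -> in01 x ->
  G1 b x = if x == 1 then 1 else if x == 0 then 0 else b.
Proof.
move=> hb hx; have -> : G1 b x = G2 b x x by rewrite /G1 /G2 minxx maxxx.
by rewrite G2E // !andbb.
Qed.

Definition F b (s : seq R) : R :=
  if all (fun z => z == 1) s then 1 else if all (fun z => z == 0) s then 0 else b.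

Lemma F01 b s : in01 b -> in01 (F b s).
Proof.
move=> hb; rewrite /F; case: ifP => _; first by rewrite /in01 ler01 lexx.
by case: ifP => _ //; rewrite /in01 ler01 lexx.
Qed.

Lemma Fstep b p y : in01 b -> in01 y -> p != [::] ->
  G2 b (F b p) y = F b (rcons p y).
Proof.
move=> hb hy pn; rewrite G2E ?F01 //; last exact: F01.
rewrite /F !all_rcons.
have h01 : (0 == 1 :> R) = false by rewrite eq_sym oner_eq0.
case a1 : (all (fun z => z == 1) p).
  have a0 : all (fun z => z == 0) p = false.
    move: pn a1; clear; case: p => // z p' _ /= /andP[/eqP -> _].
    by rewrite (oner_eq0 R).
  by rewrite eqxx a0 (oner_eq0 R) /= andbT andbF.
case a0 : (all (fun z => z == 0) p).
  by rewrite h01 eqxx /= !andbF andbT.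
have [->|bn1] := eqVneq b 1.
  by rewrite (oner_eq0 R) /= !andbF; case: ifP.
rewrite /= !andbF; case: ifP => // /andP[/eqP -> _] //.
Qed.

Lemma foldF b (p s : seq R) : in01 b -> (forall z, z \in s -> in01 z) -> p != [::] ->
  foldl (G2 b) (F b p) s = F b (p ++ s).
Proof.
move=> hb; elim: s p => [|y s IH] p hs pn /=; first by rewrite cats0.
rewrite Fstep //; last by apply: hs; rewrite inE eqxx.
rewrite IH -?cats1 -?catA //.
  by move=> z zs; apply: hs; rewrite inE zs orbT.
by rewrite cats1; case: (p) => [|? ?].
Qed.

Lemma GseqE b (s : seq R) : in01 b -> (forall z, z \in s -> in01 z) -> s != [::] ->
  Gseq b s = F b s.
Proof.
move=> hb hs; case: s hs => [|x0 [|x1 s]] hs _ //=.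
  rewrite G1E //; last by apply: hs; rewrite mem_head.
  by rewrite /F /= ?andbT.
have h0 : in01 x0 by apply: hs; rewrite mem_head.
have h1 : in01 x1 by apply: hs; rewrite !inE eqxx orbT.
have -> : G2 b x0 x1 = F b [:: x0; x1].
  by rewrite G2E // /F /= ?andbT.
rewrite foldF //; move=> z zs; apply: hs; by rewrite !inE zs !orbT.
Qed.


Lemma allmapE n (x : 'I_n -> R) (P : pred R) :
  all P [seq x i | i <- enum 'I_n] = [forall i, P (x i)].
Proof.
apply/allP/forallP => [H i | H z /mapP [i _ ->]]; last exact: H.
by apply: H; apply: map_f; rewrite mem_enum.
Qed.

Lemma GnE n b (x : 'I_n -> R) : (0 < n)%N -> in01 b -> in_cube x ->
  Gn b x = if [forall i, x i == 1] then 1 else if [forall i, x i == 0] then 0 else b.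
Proof.
move=> n0 hb hx; rewrite /Gn GseqE //.
- by rewrite /F !allmapE.
- by move=> z /mapP[i _ ->]; exact: hx.
by rewrite -size_eq0 size_map size_enum_ord -lt0n.
Qed.

Lemma in01_0 : in01 (0 : R). Proof. by rewrite /in01 lexx ler01. Qed.
Lemma in01_1 : in01 (1 : R). Proof. by rewrite /in01 lexx ler01. Qed.

Lemma in01P z : in01 z -> 0 <= z /\ z <= 1.
Proof. by case/andP. Qed.
Arguments in01P {z}.

Lemma chi01 b z : chi b z = 0 \/ chi b z = 1.
Proof. by rewrite /chi; case: ifP; [right|left]. Qed.

Lemma bigmin_seq (I : eqType) (r : seq I) (P : pred I) (F : I -> R) :
  (forall i, F i = 0 \/ F i = 1) ->
  \big[Order.min/1]_(i <- r | P i) F i =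
  if has (fun i => P i && (F i == 0)) r then 0 else 1.
Proof.
move=> HF; elim: r => [|i r IH]; first by rewrite big_nil.
rewrite big_cons /= IH; case: (P i) => //=.
case: (HF i) => ->; rewrite ?eqxx /=.
  by case: ifP => _; rewrite ?minxx // min_l // ler01.
rewrite (oner_eq0 R) /=; case: ifP => _; rewrite ?minxx //.
by rewrite min_r // ler01.
Qed.

Lemma bigE n (a x : 'I_n -> R) : in_cube a -> in_cube x ->
  \big[Order.min/1]_(i | a i != 0) chi (a i) (x i) =
  if [forall i, a i <= x i] then 1 else 0.
Proof.
move=> ha hx; rewrite bigmin_seq; last by move=> i; exact: chi01.
case H : [forall i, a i <= x i].
  suff -> : has (fun i => (a i != 0) && (chi (a i) (x i) == 0)) (index_enum 'I_n) = false by [].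
  apply/negbTE/hasP => -[i _ /andP[ai0 /eqP]].
  rewrite /chi (forallP H i) /=.
  have [a0 _] := in01P (ha i).
  have ai : 0 < a i by rewrite lt_def ai0 a0.
  have xi : 0 < x i := lt_le_trans ai (forallP H i).
  by rewrite gt_eqF //= => /eqP; rewrite (oner_eq0 R).
move/negbT: H; rewrite negb_forall => /existsP[i]; rewrite -ltNge => xa.
have [x0 _] := in01P (hx i).
have ai0 : a i != 0 by rewrite gt_eqF // (le_lt_trans x0 xa).
suff -> : has (fun i => (a i != 0) && (chi (a i) (x i) == 0)) (index_enum 'I_n) = true by [].
apply/hasP; exists i; first by rewrite mem_index_enum.
rewrite ai0 /chi /=; have -> : (a i <= x i) = false by rewrite leNgt xa.
by rewrite /= eqxx.
Qed.

Lemma hfaE n (f : ('I_n -> R) -> R) (a x : 'I_n -> R) :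
  is_aggregation f -> in_cube a -> [exists i, a i != 0] -> in_cube x ->
  hfa f a x = if [forall i, a i <= x i] then
                (if [forall i, x i == 1] then 1 else f a) else 0.
Proof.
move=> [fv _] ha /existsP[i0 ai0] hx.
have n0 : (0 < n)%N by apply: leq_ltn_trans (leq0n i0) (ltn_ord i0).
have hfa0 := fv a ha; have [fa0 fa1] := in01P hfa0.
rewrite /hfa GnE // bigE //; case H : [forall i, a i <= x i]; last first.
  rewrite min_r //; case: ifP => _; first by rewrite ler01.
  by case: ifP => _.
case H1 : [forall i, x i == 1]; first by rewrite minxx.
have -> : [forall i, x i == 0] = false.
  apply/negbTE; rewrite negb_forall; apply/existsP; exists i0.
  have [a0 _] := in01P (ha i0).
  have ai : 0 < a i0 by rewrite lt_def ai0 a0.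
  by rewrite gt_eqF // (lt_le_trans ai (forallP H i0)).
by rewrite min_l.
Qed.

End S.
Arguments in01P {R z}.

Theorem lemma2 (R : realFieldType) (n : nat) (f : ('I_n -> R) -> R)
    (a : 'I_n -> R) :
  is_aggregation f -> in_cube a ->
  ~ (forall i, a i = 0) -> ~ (forall i, a i = 1) ->
  is_aggregation (hfa f a) /\
  (forall x : 'I_n -> R, in_cube x ->
     ((forall i, x i = 1) -> hfa f a x = 1) /\
     ((forall i, a i <= x i) -> ~ (forall i, x i = 1) -> hfa f a x = f a) /\
     (~ (forall i, a i <= x i) -> hfa f a x = 0)).
Proof.
move=> hf ha na0 _.
have ex : [exists i, a i != 0].
  case: (boolP [exists i, a i != 0]) => // H; exfalso; apply: na0 => i.
  by move: H; rewrite negb_exists => /forallP /(_ i); rewrite negbK => /eqP.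
have hfa0 := (hf.1 a ha); have [fa0 fa1] := in01P hfa0.
have val : forall x, in_cube x -> in01 (hfa f a x).
  move=> x hx; rewrite hfaE //; case: ifP => _; last exact: in01_0.
  by case: ifP => _ //; exact: in01_1.
have c0 : in_cube (fun _ : 'I_n => 0 : R) by move=> i; exact: in01_0.
have c1 : in_cube (fun _ : 'I_n => 1 : R) by move=> i; exact: in01_1.
split.
  split; first exact: val.
  split; [| split].
- move=> x y hx hy xy; rewrite !hfaE //.
  case: (boolP [forall i, a i <= x i]) => Hx; last first.
    by have [] := in01P (val y hy); rewrite hfaE.
  have -> : [forall i, a i <= y i].
    by apply/forallP => i; apply: le_trans (forallP Hx i) (xy i).
  case: (boolP [forall i, x i == 1]) => H1.
    have -> : [forall i, y i == 1] => //.
    apply/forallP => i; have [_ y1] := in01P (hy i).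
    by rewrite eq_le y1 -(eqP (forallP H1 i)) xy.
  by case: ifP.
- rewrite hfaE //; case: ifP => // H; exfalso.
  case/existsP: ex => i ai0; have [a0 _] := in01P (ha i).
  by move: (forallP H i); rewrite le_eqVlt (negbTE ai0) /= ltNge a0.
- rewrite hfaE //.
  have -> : [forall i, a i <= (fun _ => 1 : R) i].
    by apply/forallP => i; have [] := in01P (ha i).
  by have -> : [forall i : 'I_n, (1 : R) == 1] by apply/forallP => i.
move=> x hx; rewrite hfaE //; split; [|split].
- move=> H1.
  have -> : [forall i, a i <= x i].
    by apply/forallP => i; rewrite H1; have [] := in01P (ha i).
  by have -> : [forall i, x i == 1] by apply/forallP => i; rewrite H1.
- move=> H H1.
  have -> : [forall i, a i <= x i] by apply/forallP.
  case: ifP => // H2; exfalso; apply: H1 => i; exact/eqP/(forallP H2 i).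
move=> H; case: ifP => // H2; exfalso; apply: H => i; exact: (forallP H2 i).
Qed.
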